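(* Consider a single base station (BS) $m$ with $a_m$ active antennas, $N_m$ available physical resource blocks (PRBs) of bandwidth $\bar b$, serving a set $\mu(m)$ of UEs with zero-forcing precoding, under fixed inter-cell interference. For UE $k\in\mu(m)$ let $\underline{R}_k>0$ be its minimum rate requirement, $\beta_k>0$ its large-scale fading, $I_k\ge 0$ the (fixed) inter-cell interference and $N>0$ the noise power at UE $k$, and let $L$ denote the number of UEs spatially multiplexed on a PRB ($L=1$ for no spatial multiplexing (NSM), $L=|\mu(m)|$ for spatial multiplexing (SM)), with $a_m>L$. When UE $k$ is given transmit power $p>0$ on each of its PRBs, the number of PRBs it needs to meet its rate requirement is $$\alpha_k(p)=\frac{\underline{R}_k}{\bar b\,\log_2\!\left(1+\frac{(a_m-L)\beta_k p}{I_k+N}\right)}.$$ The power-allocation-dependent part of the BS power consumption is $$P_m(\mathbf p)=\sum_{k\in\mu(m)}\alpha_k(p_k)\left(\frac{1}{\eta_{PA}}p_k+C\right),$$ where $\eta_{PA}\in(0,1]$ is the power amplifier efficiency and $C>0$ is the per-PRB signal-processing power cost. Let $p^*$ denote the candidate optimal power(s) described below, and suppose that for every $\tilde p>p^*$ the condition $$\alpha_k(\tilde p)\tilde p-\alpha_k(p^* )p^*\ \ge\ \delta\, C\,\eta_{PA},\qquad \delta=\alpha_k(p^* )-\alpha_k(\tilde p),$$ holds. Then: (i) in the NSM case, where all UEs of BS $m$ receive the same power $p_m$ and the PRBs are shared so that $\sum_{k\in\mu(m)}\alpha_k(p_m)\le N_m$ is required, the optimal power allocation (one that satisfies all rate requirements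 while minimizing $P_m$) is the power $p_m^*$ satisfying $\sum_{k\in\mu(m)}\alpha_k(p_m^* )=N_m$; (ii) in the SM case, where each UE may use up to $N_m$ PRBs, i.e. $\alpha_k(p_k)\le N_m$ for each $k$, the optimal individual power allocation $\mathbf p^*=(p_k^* )_{k\in\mu(m)}$ is the one for which every UE is assigned the maximum number of available PRBs, i.e. $\alpha_k(p_k^* )=N_m$ for all $k\in\mu(m)$.
   Context: Downlink multi-user massive MIMO cell with zero-forcing precoding; achievable rate of UE $k$ using $\alpha$ PRBs each with power $p$ is $\bar b\,\alpha\log_2(1+(a_m-L)\beta_k p/(I_k+N))$. Powers are equal across all PRBs assigned to a given UE; numbers of PRBs are treated as real quantities given by $\alpha_k(p)$. Powers $\tilde p<p^*$ are infeasible in the sense that they would require more PRBs than available (leading to outages). *)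

(* Defs.v *)
From Stdlib Require Import Reals List.
Open Scope R_scope.

Definition log2 (x : R) : R := ln x / ln 2.

(* finite sum over UE indices k = 0, ..., K-1 (the set mu(m) of K UEs) *)
Definition sumUE (K : nat) (f : nat -> R) : R :=
  fold_right Rplus 0 (map f (seq 0 K)).

Definition alpha (am L : nat) (bbar : R) (Rmin beta I : nat -> R) (N : R)
  (k : nat) (p : R) : R :=
  Rmin k / (bbar * log2 (1 + (INR am - INR L) * beta k * p / (I k + N))).

Definition Pm (K am L : nat) (bbar : R) (Rmin beta I : nat -> R) (N : R)
  (eta C : R) (p : nat -> R) : R :=
  sumUE K (fun k => alpha am L bbar Rmin beta I N k (p k) * (p k / eta + C)).

(* Main.v *)
Require Import Defs.
From Stdlib Require Import Reals List Lra Lia.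
Open Scope R_scope.

Lemma sum_le_gen (f g : nat -> R) n : forall s,
  (forall k, (s <= k < s + n)%nat -> f k <= g k) ->
  fold_right Rplus 0 (map f (seq s n)) <= fold_right Rplus 0 (map g (seq s n)).
Proof.
  induction n as [|n IH]; intros s H; simpl. lra.
  assert (f s <= g s) by (apply H; lia).
  assert (fold_right Rplus 0 (map f (seq (S s) n)) <= fold_right Rplus 0 (map g (seq (S s) n)))
    by (apply IH; intros; apply H; lia). lra.
Qed.

Lemma sum_lt_gen (f g : nat -> R) n : forall s, (0 < n)%nat ->
  (forall k, (s <= k < s + n)%nat -> f k < g k) ->
  fold_right Rplus 0 (map f (seq s n)) < fold_right Rplus 0 (map g (seq s n)).
Proof.
  destruct n as [|n]; intros s Hn H. lia. simpl.
  assert (f s < g s) by (apply H; lia).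
  assert (fold_right Rplus 0 (map f (seq (S s) n)) <= fold_right Rplus 0 (map g (seq (S s) n)))
    by (apply sum_le_gen; intros; apply Rlt_le, H; lia). lra.
Qed.

Lemma sumUE_le K f g : (forall k, (k < K)%nat -> f k <= g k) -> sumUE K f <= sumUE K g.
Proof. intros H; unfold sumUE; apply sum_le_gen; intros; apply H; lia. Qed.

Lemma sumUE_lt K f g : (0 < K)%nat -> (forall k, (k < K)%nat -> f k < g k) -> sumUE K f < sumUE K g.
Proof. intros H0 H; unfold sumUE; apply sum_lt_gen; auto; intros; apply H; lia. Qed.

Lemma sumUE_0 f : sumUE 0 f = 0.
Proof. reflexivity. Qed.

Lemma alpha_dec am L bbar Rmin beta I N k p q :
  (L < am)%nat -> 0 < bbar -> 0 < Rmin k -> 0 < beta k -> 0 <= I k -> 0 < N ->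
  0 < p -> p < q ->
  alpha am L bbar Rmin beta I N k q < alpha am L bbar Rmin beta I N k p.
Proof.
  intros HL Hb HR Hbe HI HN Hp Hq. unfold alpha, log2.
  assert (Hc : 0 < INR am - INR L).
  { apply lt_INR in HL. lra. }
  set (c := (INR am - INR L) * beta k).
  assert (0 < c) by (unfold c; nra).
  assert (HIN : 0 < I k + N) by lra.
  assert (H1 : 0 < c * p / (I k + N)) by (apply Rdiv_lt_0_compat; nra).
  assert (H2 : c * p / (I k + N) < c * q / (I k + N)).
  { unfold Rdiv; apply Rmult_lt_compat_r. apply Rinv_0_lt_compat; lra. nra. }
  assert (Hl1 : 0 < ln (1 + c * p / (I k + N))) by (rewrite <- ln_1; apply ln_increasing; lra).
  assert (Hl2 : ln (1 + c * p / (I k + N)) < ln (1 + c * q / (I k + N))) by (apply ln_increasing; lra).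
  assert (Hln2 : 0 < ln 2) by (rewrite <- ln_1; apply ln_increasing; lra).
  assert (D1 : 0 < bbar * (ln (1 + c * p / (I k + N)) / ln 2)).
  { apply Rmult_lt_0_compat; auto; apply Rdiv_lt_0_compat; auto. }
  assert (D12 : bbar * (ln (1 + c * p / (I k + N)) / ln 2) < bbar * (ln (1 + c * q / (I k + N)) / ln 2)).
  { apply Rmult_lt_compat_l; auto. unfold Rdiv; apply Rmult_lt_compat_r; auto. apply Rinv_0_lt_compat; auto. }
  unfold Rdiv at 1 3. apply Rmult_lt_compat_l; auto. apply Rinv_lt_contravar; nra.
Qed.

Lemma term_le (a : R -> R) eta C ps pt :
  0 < eta -> ps <= pt ->
  (ps < pt -> a pt * pt - a ps * ps >= (a ps - a pt) * C * eta) ->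
  a ps * (ps / eta + C) <= a pt * (pt / eta + C).
Proof.
  intros He Hle H. destruct (Rle_lt_or_eq_dec _ _ Hle) as [Hlt|Heq].
  - specialize (H Hlt). apply Rmult_le_reg_r with eta; auto.
    replace (a ps * (ps / eta + C) * eta) with (a ps * ps + a ps * C * eta) by (field; lra).
    replace (a pt * (pt / eta + C) * eta) with (a pt * pt + a pt * C * eta) by (field; lra).
    lra.
  - subst; lra.
Qed.
Theorem theorem2
  (K : nat)                      (* |mu(m)|, UEs indexed 0..K-1 *)
  (am : nat)                     (* active antennas a_m *)
  (Nm : nat)                     (* available PRBs N_m *)
  (bbar : R) (Rmin beta I : nat -> R) (N eta C : R)
  (Hbbar : 0 < bbar)
  (HRmin : forall k, (k < K)%nat -> 0 < Rmin k)
  (Hbeta : forall k, (k < K)%nat -> 0 < beta k)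
  (HI : forall k, (k < K)%nat -> 0 <= I k)
  (HN : 0 < N)
  (Heta : 0 < eta <= 1)
  (HC : 0 < C) :
  (* (i) NSM: L = 1, common power p for all UEs, shared PRBs *)
  (forall pstar : R,
     (1 < am)%nat ->
     0 < pstar ->
     sumUE K (fun k => alpha am 1 bbar Rmin beta I N k pstar) = INR Nm ->
     (forall k, (k < K)%nat -> forall pt, pstar < pt ->
        alpha am 1 bbar Rmin beta I N k pt * pt
        - alpha am 1 bbar Rmin beta I N k pstar * pstar
        >= (alpha am 1 bbar Rmin beta I N k pstar
            - alpha am 1 bbar Rmin beta I N k pt) * C * eta) ->
     forall p : R, 0 < p ->
       sumUE K (fun k => alpha am 1 bbar Rmin beta I N k p) <= INR Nm ->
       Pm K am 1 bbar Rmin beta I N eta C (fun _ => pstar)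
       <= Pm K am 1 bbar Rmin beta I N eta C (fun _ => p))
  /\
  (* (ii) SM: L = K, individual powers, each UE may use up to N_m PRBs *)
  (forall pstar : nat -> R,
     (K < am)%nat ->
     (forall k, (k < K)%nat -> 0 < pstar k) ->
     (forall k, (k < K)%nat -> alpha am K bbar Rmin beta I N k (pstar k) = INR Nm) ->
     (forall k, (k < K)%nat -> forall pt, pstar k < pt ->
        alpha am K bbar Rmin beta I N k pt * pt
        - alpha am K bbar Rmin beta I N k (pstar k) * pstar k
        >= (alpha am K bbar Rmin beta I N k (pstar k)
            - alpha am K bbar Rmin beta I N k pt) * C * eta) ->
     forall p : nat -> R,
       (forall k, (k < K)%nat -> 0 < p k) ->
       (forall k, (k < K)%nat -> alpha am K bbar Rmin beta I N k (p k) <= INR Nm) ->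
       Pm K am K bbar Rmin beta I N eta C pstar
       <= Pm K am K bbar Rmin beta I N eta C p).
Proof.
  split.
  - intros ps Ham Hps Hsum Hcond p Hp Hsp.
    destruct K as [|K'].
    { unfold Pm; rewrite !sumUE_0; lra. }
    assert (Hle : ps <= p).
    { destruct (Rle_or_lt ps p) as [h|h]; auto. exfalso.
      assert (sumUE (S K') (fun k => alpha am 1 bbar Rmin beta I N k ps)
              < sumUE (S K') (fun k => alpha am 1 bbar Rmin beta I N k p)).
      { apply sumUE_lt; [lia|]. intros k Hk. apply alpha_dec; auto. }
      lra. }
    unfold Pm; apply sumUE_le; intros k Hk.
    apply (term_le (fun x => alpha am 1 bbar Rmin beta I N k x)); [lra|auto|].
    intros Hlt; apply Hcond; auto.
  - intros ps Ham Hps Heq Hcond p Hp Hpl.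
    unfold Pm; apply sumUE_le; intros k Hk.
    assert (Hle : ps k <= p k).
    { destruct (Rle_or_lt (ps k) (p k)) as [h|h]; auto. exfalso.
      assert (alpha am K bbar Rmin beta I N k (ps k) < alpha am K bbar Rmin beta I N k (p k))
        by (apply alpha_dec; auto).
      specialize (Heq k Hk); specialize (Hpl k Hk); lra. }
    apply (term_le (fun x => alpha am K bbar Rmin beta I N k x)); [lra|auto|].
    intros Hlt; apply Hcond; auto.
Qed.
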